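(* With notation as in the context, let $s\in\{3,4,5,6,7\}$ and $s'=s+1$, and define $\psi_s(J)=\alpha_{s'}+\sum_{\beta\in J}\alpha_{h_s(\beta)}$ for $J\in\mathcal{J}(\Delta_s^+)$. Then $\psi_s$ is an isomorphism of posets from $\mathcal{J}(\Delta_s^+)$ (ordered by inclusion) onto $\Delta_{s'}^+$ when $s\le6$, and onto $\Delta_8^+\setminus\{\theta\}$ when $s=7$, where $\theta$ is the highest root of $E_8$. Moreover it is canonical: if $h:\Delta_s^+\to\{1,\dots,s\}$ is any function for which $J\mapsto\alpha_{s'}+\sum_{\beta\in J}\alpha_{h(\beta)}$ is a poset isomorphism onto the same target, then $h=h_s$.
   Context: Let $\Delta(E_8)$ be the root system of type $E_8$ with simple roots $\alpha_1,\dots,\alpha_8$, where $\langle\alpha_i,\alpha_i\rangle=2$, $\langle\alpha_i,\alpha_j\rangle=-1$ if $\{i,j\}\in\{\{1,3\},\{3,4\},\{4,5\},\{5,6\},\{6,7\},\{7,8\},\{2,4\}\}$, and $0$ otherwise; $\Delta^+$ denotes its positive roots, with $\beta=\sum\beta^i\alpha_i$, partially ordered by $\beta\le\beta'$ iff $\beta'-\beta$ is a nonnegative integer combination of simple roots. For $\beta\in\Delta^+$ let $m(\beta)=\max\{i:\beta^i\ne0\}$, and define the strata $\Delta_1^+=\{\alpha_1\}$, $\Delta_3^+=\{\beta: m(\beta)\in\{2,3\}\}$, $\Delta_s^+=\{\beta: m(\beta)=s\}$ for $4\le s\le 8$, each with the induced order. An order ideal of a poset $Y$ is a subset $J$ such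 that $x\in J$, $y\le x$ imply $y\in J$; $\mathcal{J}(Y)$ is the set of order ideals (including $\emptyset$). For $3\le s\le 8$, $\mathsf{Dyn}(E_s)$ is the graph on $v_1,\dots,v_s$ with $v_i\sim v_j$ iff $\langle\alpha_i,\alpha_j\rangle=-1$; $\mathsf{H}_s$ is the graph on $\Delta_s^+$ with $\beta\sim\beta'$ iff $\pm(\beta-\beta')$ is a simple root. An open map of graphs is a graph homomorphism that maps the neighbours of each vertex onto the neighbours of its image. For $3\le s\le7$ there is a unique function $h_s:\Delta_s^+\to\{1,\dots,s\}$ with $h_s(\alpha_s)=s$ such that $\beta\mapsto v_{h_s(\beta)}$ is an open map $\mathsf{H}_s\to\mathsf{Dyn}(E_s)$; this is the $h_s$ used in the claim. *)

(* Defs.v *)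
From HB Require Import structures.
From mathcomp Require Import all_boot all_order all_algebra.
From mathcomp Require Import finmap.
Set Implicit Arguments. Unset Strict Implicit. Unset Printing Implicit Defensive.
Import GRing.Theory Num.Theory.

(* Vectors of coefficients w.r.t. the simple roots alpha_1..alpha_8:
   the ordinal k : 'I_8 stands for the index k+1. *)
Definition V := {ffun 'I_8 -> nat}.

(* Edges of the E8 Dynkin diagram, 1-based indices as in the paper. *)
Definition adj (i j : nat) : bool :=
  ((i, j) \in [:: (1,3); (3,4); (4,5); (5,6); (6,7); (7,8); (2,4)])
  || ((j, i) \in [:: (1,3); (3,4); (4,5); (5,6); (6,7); (7,8); (2,4)]).

Definition cartan (i j : nat) : int :=
  if i == j then 2%R else if adj i j then (-1)%R else 0%R.

Definition form (b c : V) : int :=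
  (\sum_(i < 8) \sum_(j < 8) (b i)%:Z * (c j)%:Z * cartan i.+1 j.+1)%R.

Definition alpha (i : nat) : V := [ffun k : 'I_8 => nat_of_bool (k.+1 == i)].

Definition addv (b c : V) : V := [ffun k => b k + c k].

(* Positive roots of E8: nonzero nonnegative integer combinations of the
   simple roots of squared length 2 (E8 is simply laced). *)
Definition pos_root (b : V) : bool :=
  [exists k, b k != 0] && (form b b == 2%R).

Definition rle (b c : V) : bool := [forall k, b k <= c k].

Definition mx (b : V) : nat := \max_(k < 8 | b k != 0) k.+1.

Definition Delta (s : nat) (b : V) : bool :=
  pos_root b && (if s == 3 then (mx b == 2) || (mx b == 3) else mx b == s).

Definition is_ideal (s : nat) (J : {fset V}) : Prop :=
  (forall b, b \in J -> Delta s b) /\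
  (forall b c, b \in J -> Delta s c -> rle c b -> c \in J).

Definition dyn_adj (s i j : nat) : bool :=
  [&& 1 <= i <= s, 1 <= j <= s & adj i j].

Definition hadj (b c : V) : bool :=
  [exists k : 'I_8, (c == addv b (alpha k.+1)) || (b == addv c (alpha k.+1))].

(* h : Delta_s^+ -> {1..s} with h(alpha_s) = s, such that beta |-> v_{h beta}
   is an open map H_s -> Dyn(E_s). *)
Definition is_hs (s : nat) (h : V -> nat) : Prop :=
  [/\ h (alpha s) = s,
      (forall b, Delta s b -> 1 <= h b <= s),
      (forall b c, Delta s b -> Delta s c -> hadj b c -> dyn_adj s (h b) (h c)) &
      (forall b j, Delta s b -> dyn_adj s (h b) j ->
         exists c, [/\ Delta s c, hadj b c & h c = j])].

Definition psi (s : nat) (h : V -> nat) (J : {fset V}) : V :=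
  [ffun k : 'I_8 => nat_of_bool (k.+1 == s.+1) + \sum_(b <- J) nat_of_bool (k.+1 == h b)].

Definition is_highest (b : V) : Prop :=
  pos_root b /\ forall c, pos_root c -> rle c b.

Definition target (s : nat) (b : V) : Prop :=
  Delta s.+1 b /\ (s = 7 -> ~ is_highest b).

Definition psi_iso (s : nat) (h : V -> nat) : Prop :=
  [/\ (forall J, is_ideal s J -> target s (psi s h J)),
      (forall b, target s b -> exists J, is_ideal s J /\ psi s h J = b) &
      (forall J1 J2, is_ideal s J1 -> is_ideal s J2 ->
         (fsubset J1 J2 <-> rle (psi s h J1) (psi s h J2)))].

(* Main.v *)
From HB Require Import structures.
From mathcomp Require Import all_boot all_order all_algebra.
From mathcomp Require Import finmap.
From mathcomp Require Import ring lra zify.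
Require Import Defs.
Set Implicit Arguments. Unset Strict Implicit. Unset Printing Implicit Defensive.
Import GRing.Theory Num.Theory.
Definition vec (l : seq nat) : V := [ffun k : 'I_8 => nth 0 l k].
Definition lst (b : V) : seq nat := [seq b (inord j) | j <- iota 0 8].

Lemma size_lst b : size (lst b) = 8. Proof. by rewrite size_map size_iota. Qed.
Lemma nth_lst b (k : 'I_8) : nth 0 (lst b) k = b k.
Proof. by rewrite (nth_map 0) ?size_iota // nth_iota // add0n inord_val. Qed.
Lemma lstK b : vec (lst b) = b.
Proof. by apply/ffunP => k; rewrite ffunE nth_lst. Qed.
Lemma vecK l : size l = 8 -> lst (vec l) = l.
Proof.
move=> sl; apply: (@eq_from_nth _ 0); first by rewrite size_lst sl.
move=> i; rewrite size_lst => ltn.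
by rewrite (nth_map 0) ?size_iota // nth_iota // add0n ffunE inordK.
Qed.
Lemma vec_inj l l' : size l = 8 -> size l' = 8 -> (vec l == vec l') = (l == l').
Proof.
move=> s1 s2; apply/eqP/eqP => [e|->//].
by rewrite -(vecK s1) -(vecK s2) e.
Qed.

Definition xs (l : seq nat) (i : nat) : int := (nth 0 l i)%:Z.
Definition Qf (x : nat -> int) : int :=
  (2 * (x 0 * x 0 + x 1 * x 1 + x 2 * x 2 + x 3 * x 3 +
        x 4 * x 4 + x 5 * x 5 + x 6 * x 6 + x 7 * x 7)
   - 2 * (x 0 * x 2 + x 2 * x 3 + x 3 * x 4 + x 4 * x 5 +
          x 5 * x 6 + x 6 * x 7 + x 1 * x 3))%R.
Definition QL l := Qf (xs l).

Lemma formQ l : form (vec l) (vec l) = QL l.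
Proof.
rewrite /form !big_ord_recl !big_ord0 /=.
by rewrite !ffunE /cartan /adj /= /QL /Qf /xs /=; ring.
Qed.

Lemma Qf_ext x y : (forall j, j < 8 -> x j = y j) -> Qf x = Qf y.
Proof. by move=> H; rewrite /Qf !H. Qed.

Definition Bf (x : nat -> int) (i : nat) : int :=
  match i with
  | 0 => 2 * x 0 - x 2
  | 1 => 2 * x 1 - x 3
  | 2 => 2 * x 2 - x 0 - x 3
  | 3 => 2 * x 3 - x 2 - x 4 - x 1
  | 4 => 2 * x 4 - x 3 - x 5
  | 5 => 2 * x 5 - x 4 - x 6
  | 6 => 2 * x 6 - x 5 - x 7
  | _ => 2 * x 7 - x 6
  end%R.

Lemma Qf_sum x : Qf x = (x 0 * Bf x 0 + x 1 * Bf x 1 + x 2 * Bf x 2 + x 3 * Bf x 3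
  + x 4 * Bf x 4 + x 5 * Bf x 5 + x 6 * Bf x 6 + x 7 * Bf x 7)%R.
Proof. rewrite /Qf /Bf; ring. Qed.

Definition upd (x : nat -> int) (i : nat) := fun j => if j == i then (x j - 1)%R else x j.

Lemma Qf_upd x i : i < 8 -> Qf (upd x i) = (Qf x - 2 * Bf x i + 2)%R.
Proof.
do 8?[case: i => [_|i]; first by rewrite /Qf /upd /Bf /=; ring]; by [].
Qed.

Lemma sq0 (c y : int) : (0 < c)%R -> (c * (y * y) <= 0)%R -> y = 0%R.
Proof. move=> hc h; nia. Qed.

Lemma lin8 (q s0 s1 s2 s3 s4 s5 s6 s7 : int) :
  (60 * q = 30 * s0 + 30 * s1 + 10 * s2 + 2 * s3 + 3 * s4 + 5 * s5 + 10 * s6 + 30 * s7)%R ->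
  (q <= 0)%R -> (0 <= s0)%R -> (0 <= s1)%R -> (0 <= s2)%R -> (0 <= s3)%R -> (0 <= s4)%R ->
  (0 <= s5)%R -> (0 <= s6)%R -> (0 <= s7)%R ->
  (s0 = 0 /\ s1 = 0 /\ s2 = 0 /\ s3 = 0 /\ s4 = 0 /\ s5 = 0 /\ s6 = 0 /\ s7 = 0)%R.
Proof. move=> *; repeat split; lia. Qed.

Lemma tri (a0 a1 a2 a3 a4 a5 a6 a7 : int) :
  (2 * a0 - a2 = 0)%R -> (2 * a1 - a3 = 0)%R -> (3 * a2 - 2 * a3 = 0)%R ->
  (5 * a3 - 6 * a4 = 0)%R -> (4 * a4 - 5 * a5 = 0)%R -> (3 * a5 - 4 * a6 = 0)%R ->
  (2 * a6 - 3 * a7 = 0)%R -> a7 = 0%R ->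
  (a0 = 0 /\ a1 = 0 /\ a2 = 0 /\ a3 = 0 /\ a4 = 0 /\ a5 = 0 /\ a6 = 0 /\ a7 = 0)%R.
Proof. move=> *; repeat split; lia. Qed.

Lemma Qf_posdef x : (Qf x <= 0)%R -> forall j, j < 8 -> x j = 0%R.
Proof.
move=> H.
have E : (60 * Qf x = 30 * ((2 * x 0 - x 2) * (2 * x 0 - x 2))
   + 30 * ((2 * x 1 - x 3) * (2 * x 1 - x 3))
   + 10 * ((3 * x 2 - 2 * x 3) * (3 * x 2 - 2 * x 3))
   + 2 * ((5 * x 3 - 6 * x 4) * (5 * x 3 - 6 * x 4))
   + 3 * ((4 * x 4 - 5 * x 5) * (4 * x 4 - 5 * x 5))
   + 5 * ((3 * x 5 - 4 * x 6) * (3 * x 5 - 4 * x 6))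
   + 10 * ((2 * x 6 - 3 * x 7) * (2 * x 6 - 3 * x 7))
   + 30 * (x 7 * x 7))%R by rewrite /Qf; ring.
have P (y : int) : (0 <= y * y)%R by nia.
have Z (y : int) : (y * y = 0)%R -> y = 0%R by move/eqP; rewrite mulf_eq0 orbb => /eqP.
have [s0 [s1 [s2 [s3 [s4 [s5 [s6 s7]]]]]]] := lin8 E H (P _) (P _) (P _) (P _) (P _) (P _) (P _) (P _).
move: (Z _ s0) (Z _ s1) (Z _ s2) (Z _ s3) (Z _ s4) (Z _ s5) (Z _ s6) (Z _ s7) => e0 e1 e2 e3 e4 e5 e6 e7.
have [z0 [z1 [z2 [z3 [z4 [z5 [z6 z7]]]]]]] := tri e0 e1 e2 e3 e4 e5 e6 e7.
move=> j; do 8?[case: j => [_|j]; first by []]; by [].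
Qed.

Definition posL (l : seq nat) : bool := has (fun a => a != 0) l && (QL l == 2%R).
Definition subL (l : seq nat) (i : nat) := [seq nth 0 l j - (j == i) | j <- iota 0 8].
Definition addL (l : seq nat) (i : nat) := [seq nth 0 l j + (j == i) | j <- iota 0 8].
Definition eL (i : nat) : seq nat := [seq nat_of_bool (j.+1 == i) | j <- iota 0 8].

Lemma size_subL l i : size (subL l i) = 8. Proof. by rewrite size_map size_iota. Qed.
Lemma size_addL l i : size (addL l i) = 8. Proof. by rewrite size_map size_iota. Qed.
Lemma size_eL i : size (eL i) = 8. Proof. by rewrite size_map size_iota. Qed.

Lemma xs_subL l i j : i < 8 -> 0 < nth 0 l i -> j < 8 -> xs (subL l i) j = upd (xs l) i j.
Proof.
move=> i8 pi j8; rewrite /xs /upd (nth_map 0) ?size_iota // nth_iota // add0n.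
case: eqP => [->|_]; last by rewrite subn0.
move: pi; case: (nth 0 l i) => // a _; rewrite subn1 /=; lia.
Qed.

Lemma sum8_le0 (t0 t1 t2 t3 t4 t5 t6 t7 : int) :
  (t0 <= 0)%R -> (t1 <= 0)%R -> (t2 <= 0)%R -> (t3 <= 0)%R -> (t4 <= 0)%R ->
  (t5 <= 0)%R -> (t6 <= 0)%R -> (t7 <= 0)%R ->
  (2 = t0 + t1 + t2 + t3 + t4 + t5 + t6 + t7)%R -> False.
Proof. lia. Qed.

Lemma QL_nz l : size l = 8 -> QL l = 2%R -> has (fun a => a != 0) l.
Proof.
move=> sl Q2; case: (boolP (has _ _)) => // /hasPn H.
suff : QL l = 0%R by rewrite Q2.
rewrite /QL (@Qf_ext _ (fun _ => 0%R)); first by rewrite /Qf; ring.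
move=> j j8; rewrite /xs.
have := H (nth 0 l j) (mem_nth 0 (_ : j < size l)); rewrite sl => /(_ j8).
by rewrite negbK => /eqP ->.
Qed.

Lemma step l : size l = 8 -> posL l ->
  (exists2 i, i < 8 & l = eL i.+1) \/
  (exists2 i, i < 8 & (0 < nth 0 l i) && posL (subL l i)).
Proof.
move=> sl /andP[nz /eqP Q2].
set x := xs l.
have [i i8 [pi Bi]] : exists2 i, i < 8 & (0 < nth 0 l i) /\ (1 <= Bf x i)%R.
  case: (boolP (has (fun i => (0 < nth 0 l i) && (1 <= Bf x i)%R) (iota 0 8))).
    by case/hasP=> i; rewrite mem_iota => /andP[_ i8] /andP[a b]; exists i.
  move/hasPn => H; exfalso.
  have T j : j < 8 -> (x j * Bf x j <= 0)%R.
    move=> j8; have := H j; rewrite mem_iota /= j8 => /(_ isT).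
    rewrite negb_and /x /xs.
    case/orP => [|hb].
      by rewrite -eqn0Ngt => /eqP ->; rewrite mul0r.
    move: hb; set B := Bf _ _ => hb.
    have hb' : (B <= 0)%R by move: hb; lia.
    exact: mulr_ge0_le0.
  apply: (sum8_le0 (T 0 isT) (T 1 isT) (T 2 isT) (T 3 isT) (T 4 isT)
                   (T 5 isT) (T 6 isT) (T 7 isT)).
  by rewrite -Qf_sum -Q2.
have QU := Qf_upd x i8.
have E : QL (subL l i) = Qf (upd x i) by apply: Qf_ext => j j8; rewrite xs_subL.
case: (Bf x i =P 1%R) => [B1|B2].
  right; exists i => //; rewrite pi /=.
  have Q2' : QL (subL l i) = 2%R by rewrite E QU -/(QL l) Q2 B1.
  by rewrite /posL QL_nz ?size_subL // Q2' eqxx.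
left; exists i => //.
have B2' : (2 <= Bf x i)%R by move: Bi B2; lia.
have Z := @Qf_posdef (upd x i).
have Z' : (Qf (upd x i) <= 0)%R by rewrite QU -/(QL l) Q2; move: B2'; lia.
apply: (@eq_from_nth _ 0); first by rewrite sl size_eL.
move=> j; rewrite sl => j8; have := Z Z' j j8.
rewrite /upd /x /xs (nth_map 0) ?size_iota // nth_iota // add0n eqSS.
case: eqP => [->|_] /=; lia.
Qed.

Lemma subL_sum l i : size l = 8 -> i < 8 -> 0 < nth 0 l i -> sumn (subL l i) < sumn l.
Proof.
case: l => [|a0[|a1[|a2[|a3[|a4[|a5[|a6[|a7[|]]]]]]]]] //= _.
by do 8?[case: i => [|i] /=; first lia].
Qed.

Lemma addL_subL l i : size l = 8 -> i < 8 -> 0 < nth 0 l i -> addL (subL l i) i = l.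
Proof.
case: l => [|a0[|a1[|a2[|a3[|a4[|a5[|a6[|a7[|]]]]]]]]] //= _.
do 8?[case: i => [|i] /=; first by move=> _ p; rewrite /addL /subL /= !subn0 !addn0 subn1 addn1 prednK].
by [].
Qed.

Definition rootsL : seq (seq nat) := [::
[:: 0; 0; 0; 0; 0; 0; 0; 1];
[:: 0; 0; 0; 0; 0; 0; 1; 0];
[:: 0; 0; 0; 0; 0; 1; 0; 0];
[:: 0; 0; 0; 0; 1; 0; 0; 0];
[:: 0; 0; 0; 1; 0; 0; 0; 0];
[:: 0; 0; 1; 0; 0; 0; 0; 0];
[:: 0; 1; 0; 0; 0; 0; 0; 0];
[:: 1; 0; 0; 0; 0; 0; 0; 0];
[:: 0; 0; 0; 0; 0; 0; 1; 1];
[:: 0; 0; 0; 0; 0; 1; 1; 0];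
[:: 0; 0; 0; 0; 1; 1; 0; 0];
[:: 0; 0; 0; 1; 1; 0; 0; 0];
[:: 0; 0; 1; 1; 0; 0; 0; 0];
[:: 0; 1; 0; 1; 0; 0; 0; 0];
[:: 1; 0; 1; 0; 0; 0; 0; 0];
[:: 0; 0; 0; 0; 0; 1; 1; 1];
[:: 0; 0; 0; 0; 1; 1; 1; 0];
[:: 0; 0; 0; 1; 1; 1; 0; 0];
[:: 0; 0; 1; 1; 1; 0; 0; 0];
[:: 0; 1; 0; 1; 1; 0; 0; 0];
[:: 0; 1; 1; 1; 0; 0; 0; 0];
[:: 1; 0; 1; 1; 0; 0; 0; 0];
[:: 0; 0; 0; 0; 1; 1; 1; 1];
[:: 0; 0; 0; 1; 1; 1; 1; 0];
[:: 0; 0; 1; 1; 1; 1; 0; 0];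
[:: 0; 1; 0; 1; 1; 1; 0; 0];
[:: 0; 1; 1; 1; 1; 0; 0; 0];
[:: 1; 0; 1; 1; 1; 0; 0; 0];
[:: 1; 1; 1; 1; 0; 0; 0; 0];
[:: 0; 0; 0; 1; 1; 1; 1; 1];
[:: 0; 0; 1; 1; 1; 1; 1; 0];
[:: 0; 1; 0; 1; 1; 1; 1; 0];
[:: 0; 1; 1; 1; 1; 1; 0; 0];
[:: 0; 1; 1; 2; 1; 0; 0; 0];
[:: 1; 0; 1; 1; 1; 1; 0; 0];
[:: 1; 1; 1; 1; 1; 0; 0; 0];
[:: 0; 0; 1; 1; 1; 1; 1; 1];
[:: 0; 1; 0; 1; 1; 1; 1; 1];
[:: 0; 1; 1; 1; 1; 1; 1; 0];
[:: 0; 1; 1; 2; 1; 1; 0; 0];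
[:: 1; 0; 1; 1; 1; 1; 1; 0];
[:: 1; 1; 1; 1; 1; 1; 0; 0];
[:: 1; 1; 1; 2; 1; 0; 0; 0];
[:: 0; 1; 1; 1; 1; 1; 1; 1];
[:: 0; 1; 1; 2; 1; 1; 1; 0];
[:: 0; 1; 1; 2; 2; 1; 0; 0];
[:: 1; 0; 1; 1; 1; 1; 1; 1];
[:: 1; 1; 1; 1; 1; 1; 1; 0];
[:: 1; 1; 1; 2; 1; 1; 0; 0];
[:: 1; 1; 2; 2; 1; 0; 0; 0];
[:: 0; 1; 1; 2; 1; 1; 1; 1];
[:: 0; 1; 1; 2; 2; 1; 1; 0];
[:: 1; 1; 1; 1; 1; 1; 1; 1];
[:: 1; 1; 1; 2; 1; 1; 1; 0];
[:: 1; 1; 1; 2; 2; 1; 0; 0];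
[:: 1; 1; 2; 2; 1; 1; 0; 0];
[:: 0; 1; 1; 2; 2; 1; 1; 1];
[:: 0; 1; 1; 2; 2; 2; 1; 0];
[:: 1; 1; 1; 2; 1; 1; 1; 1];
[:: 1; 1; 1; 2; 2; 1; 1; 0];
[:: 1; 1; 2; 2; 1; 1; 1; 0];
[:: 1; 1; 2; 2; 2; 1; 0; 0];
[:: 0; 1; 1; 2; 2; 2; 1; 1];
[:: 1; 1; 1; 2; 2; 1; 1; 1];
[:: 1; 1; 1; 2; 2; 2; 1; 0];
[:: 1; 1; 2; 2; 1; 1; 1; 1];
[:: 1; 1; 2; 2; 2; 1; 1; 0];
[:: 1; 1; 2; 3; 2; 1; 0; 0];
[:: 0; 1; 1; 2; 2; 2; 2; 1];
[:: 1; 1; 1; 2; 2; 2; 1; 1];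
[:: 1; 1; 2; 2; 2; 1; 1; 1];
[:: 1; 1; 2; 2; 2; 2; 1; 0];
[:: 1; 1; 2; 3; 2; 1; 1; 0];
[:: 1; 2; 2; 3; 2; 1; 0; 0];
[:: 1; 1; 1; 2; 2; 2; 2; 1];
[:: 1; 1; 2; 2; 2; 2; 1; 1];
[:: 1; 1; 2; 3; 2; 1; 1; 1];
[:: 1; 1; 2; 3; 2; 2; 1; 0];
[:: 1; 2; 2; 3; 2; 1; 1; 0];
[:: 1; 1; 2; 2; 2; 2; 2; 1];
[:: 1; 1; 2; 3; 2; 2; 1; 1];
[:: 1; 1; 2; 3; 3; 2; 1; 0];
[:: 1; 2; 2; 3; 2; 1; 1; 1];
[:: 1; 2; 2; 3; 2; 2; 1; 0];
[:: 1; 1; 2; 3; 2; 2; 2; 1];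
[:: 1; 1; 2; 3; 3; 2; 1; 1];
[:: 1; 2; 2; 3; 2; 2; 1; 1];
[:: 1; 2; 2; 3; 3; 2; 1; 0];
[:: 1; 1; 2; 3; 3; 2; 2; 1];
[:: 1; 2; 2; 3; 2; 2; 2; 1];
[:: 1; 2; 2; 3; 3; 2; 1; 1];
[:: 1; 2; 2; 4; 3; 2; 1; 0];
[:: 1; 1; 2; 3; 3; 3; 2; 1];
[:: 1; 2; 2; 3; 3; 2; 2; 1];
[:: 1; 2; 2; 4; 3; 2; 1; 1];
[:: 1; 2; 3; 4; 3; 2; 1; 0];
[:: 1; 2; 2; 3; 3; 3; 2; 1];
[:: 1; 2; 2; 4; 3; 2; 2; 1];
[:: 1; 2; 3; 4; 3; 2; 1; 1];
[:: 2; 2; 3; 4; 3; 2; 1; 0];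
[:: 1; 2; 2; 4; 3; 3; 2; 1];
[:: 1; 2; 3; 4; 3; 2; 2; 1];
[:: 2; 2; 3; 4; 3; 2; 1; 1];
[:: 1; 2; 2; 4; 4; 3; 2; 1];
[:: 1; 2; 3; 4; 3; 3; 2; 1];
[:: 2; 2; 3; 4; 3; 2; 2; 1];
[:: 1; 2; 3; 4; 4; 3; 2; 1];
[:: 2; 2; 3; 4; 3; 3; 2; 1];
[:: 1; 2; 3; 5; 4; 3; 2; 1];
[:: 2; 2; 3; 4; 4; 3; 2; 1];
[:: 1; 3; 3; 5; 4; 3; 2; 1];
[:: 2; 2; 3; 5; 4; 3; 2; 1];
[:: 2; 2; 4; 5; 4; 3; 2; 1];
[:: 2; 3; 3; 5; 4; 3; 2; 1];
[:: 2; 3; 4; 5; 4; 3; 2; 1];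
[:: 2; 3; 4; 6; 4; 3; 2; 1];
[:: 2; 3; 4; 6; 5; 3; 2; 1];
[:: 2; 3; 4; 6; 5; 4; 2; 1];
[:: 2; 3; 4; 6; 5; 4; 3; 1];
[:: 2; 3; 4; 6; 5; 4; 3; 2]].

Lemma rootsL_size : all (fun l => size l == 8) rootsL.
Proof. by vm_compute. Qed.
Lemma rootsL_closed :
  all (fun c => all (fun i => posL (addL c i) ==> (addL c i \in rootsL)) (iota 0 8)) rootsL.
Proof. vm_compute. reflexivity. Qed.
Lemma rootsL_simple : all (fun i => eL i.+1 \in rootsL) (iota 0 8).
Proof. by vm_compute. Qed.

Lemma roots_complete l : size l = 8 -> posL l -> l \in rootsL.
Proof.
move: {2}(sumn l) (leqnn (sumn l)) => n; elim: n l => [|n IH] l Hn sl pl.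
  case: (step sl pl) => [[i i8 ->]|[i i8 /andP[pi ps]]].
    by have /allP := rootsL_simple; apply; rewrite mem_iota.
  by have := subL_sum sl i8 pi; rewrite ltnNge (leq_trans Hn).
case: (step sl pl) => [[i i8 ->]|[i i8 /andP[pi ps]]].
  by have /allP := rootsL_simple; apply; rewrite mem_iota.
have Hs : subL l i \in rootsL.
  apply: IH (size_subL _ _) ps; have := subL_sum sl i8 pi; move: Hn; lia.
have /allP/(_ _ Hs)/allP/(_ i) := rootsL_closed.
by rewrite mem_iota i8 addL_subL // pl => /(_ isT).
Qed.

Lemma nth_lst' b j : j < 8 -> nth 0 (lst b) j = b (inord j).
Proof. by move=> j8; rewrite (nth_map 0) ?size_iota // nth_iota. Qed.

Lemma lst_inj b c : (b == c) = (lst b == lst c).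
Proof. by apply/eqP/eqP => [->//|e]; rewrite -(lstK b) -(lstK c) e. Qed.

Lemma ex8 (P : nat -> bool) : [exists k : 'I_8, P k] = has P (iota 0 8).
Proof.
apply/existsP/hasP => [[k Pk]|[k]]; first by exists (nat_of_ord k) => //; rewrite mem_iota ltn_ord.
by rewrite mem_iota /= => k8 Pk; exists (Ordinal k8).
Qed.

Lemma all8 (P : nat -> bool) : [forall k : 'I_8, P k] = all P (iota 0 8).
Proof.
apply/forallP/allP => [H k|H k]; last by apply: H; rewrite mem_iota ltn_ord.
by rewrite mem_iota /= => k8; exact: (H (Ordinal k8)).
Qed.

Lemma formQ' b : form b b = QL (lst b).
Proof. by have := formQ (lst b); rewrite lstK. Qed.

Lemma pos_rootE b : pos_root b = posL (lst b).
Proof.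
rewrite /pos_root /posL formQ'; congr (_ && _).
rewrite (@eq_existsb _ _ (fun k : 'I_8 => nth 0 (lst b) k != 0)); last by move=> k; rewrite nth_lst.
rewrite (ex8 (fun k => nth 0 (lst b) k != 0)); apply/hasP/hasP => [[k] |[a]].
  by rewrite mem_iota /= => k8 nz; exists (nth 0 (lst b) k) => //; rewrite mem_nth ?size_lst.
move=> /(nthP 0) [k]; rewrite size_lst => k8 <- nz; exists k => //; by rewrite mem_iota.
Qed.

Definition mxL (l : seq nat) : nat :=
  foldr (fun k acc => maxn (if nth 0 l k != 0 then k.+1 else 0) acc) 0 (iota 0 8).

Lemma mxE b : mx b = mxL (lst b).
Proof.
rewrite /mx -{1}(lstK b) big_mkcond !big_ord_recl big_ord0 /=.
by rewrite !ffunE.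
Qed.

Definition DeltaL (s : nat) (l : seq nat) : bool :=
  posL l && (if s == 3 then (mxL l == 2) || (mxL l == 3) else mxL l == s).
Definition Dl (s : nat) : seq (seq nat) := [seq l <- rootsL | DeltaL s l].

Lemma pos_root_lst b : pos_root b -> lst b \in rootsL.
Proof. by rewrite pos_rootE; apply: roots_complete; rewrite size_lst. Qed.

Lemma DeltaE s b : Delta s b = (lst b \in Dl s).
Proof.
rewrite mem_filter /Delta /DeltaL mxE pos_rootE.
case: (boolP (posL (lst b))) => //= pb.
by rewrite roots_complete ?size_lst // andbT.
Qed.

Definition rleL (l l' : seq nat) : bool := all (fun k => nth 0 l k <= nth 0 l' k) (iota 0 8).

Lemma rleE b c : rle b c = rleL (lst b) (lst c).
Proof.
rewrite /rle (@eq_forallb _ _ (fun k : 'I_8 => nth 0 (lst b) k <= nth 0 (lst c) k)).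
  by rewrite (all8 (fun k => nth 0 (lst b) k <= nth 0 (lst c) k)).
by move=> k; rewrite !nth_lst.
Qed.

Definition hadjL (l l' : seq nat) : bool :=
  has (fun k => (l' == addL l k) || (l == addL l' k)) (iota 0 8).

Lemma lst_addv b k : k < 8 -> lst (addv b (alpha k.+1)) = addL (lst b) k.
Proof.
move=> k8; apply: (@eq_from_nth _ 0); first by rewrite size_lst size_addL.
move=> j; rewrite size_lst => j8.
rewrite nth_lst' // (nth_map 0) ?size_iota // nth_iota // add0n !ffunE nth_lst' //.
by rewrite inordK.
Qed.

Lemma hadjE b c : hadj b c = hadjL (lst b) (lst c).
Proof.
rewrite /hadj (@eq_existsb _ _ (fun k : 'I_8 =>
   (lst c == addL (lst b) k) || (lst b == addL (lst c) k))).
  by rewrite (ex8 (fun k => (lst c == addL (lst b) k) || (lst b == addL (lst c) k))).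
by move=> k; rewrite !lst_inj !lst_addv.
Qed.

Lemma lst_alpha i : lst (alpha i) = eL i.
Proof.
apply: (@eq_from_nth _ 0); first by rewrite size_lst size_eL.
move=> j; rewrite size_lst => j8.
by rewrite nth_lst' // (nth_map 0) ?size_iota // nth_iota // ffunE inordK.
Qed.

Section Enum.
Variables (A : eqType) (vals : seq A) (ok : seq A -> bool).
Fixpoint enumk (k : nat) : seq (seq A) :=
  if k is k'.+1 then
    flatten [seq [seq rcons p v | v <- vals & ok (rcons p v)] | p <- enumk k']
  else [:: [::]].

Lemma enumk_complete m :
  (forall k, 0 < k <= size m -> ok (take k m)) -> all (mem vals) m -> m \in enumk (size m).
Proof.
elim/last_ind: m => [|p v IH] H Hv; first by rewrite inE.
rewrite size_rcons /=; apply/flattenP.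
exists [seq rcons p v0 | v0 <- vals & ok (rcons p v0)]; first apply: map_f.
  apply: IH; last by move: Hv; rewrite all_rcons => /andP[].
  move=> k /andP[k0 kp]; have -> : take k p = take k (rcons p v) by rewrite -cats1 takel_cat.
  by apply: H; rewrite k0 size_rcons (leq_trans kp).
have Hv1 : v \in vals by move: Hv; rewrite all_rcons => /andP[].
apply: map_f; rewrite mem_filter Hv1 andbT.
have := H (size p).+1; rewrite size_rcons leqnn take_oversize ?size_rcons //.
by move/(_ isT).
Qed.

Lemma enumk_ok k m : m \in enumk k -> size m = k /\ (0 < k -> ok m).
Proof.
elim: k m => [|k IH] m /=; first by rewrite inE => /eqP ->.
case/flattenP => _ /mapP [p /IH [sp _] ->] /mapP [v]; rewrite mem_filter => /andP[okv _] ->.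
by rewrite size_rcons sp.
Qed.
End Enum.

Definition thetaL : seq nat := [:: 2; 3; 4; 6; 5; 4; 3; 2].

Definition hv (s : nat) : seq nat :=
  match s with
  | 3 => [:: 3; 2; 1]
  | 4 => [:: 4; 3; 2; 4; 1; 3]
  | 5 => [:: 5; 4; 3; 2; 4; 1; 5; 3; 4; 2]
  | 6 => [:: 6; 5; 4; 3; 2; 4; 1; 5; 3; 6; 4; 5; 2; 4; 3; 1]
  | _ => [:: 7; 6; 5; 4; 3; 2; 4; 1; 5; 3; 6; 4; 7; 5; 2; 6; 4; 5; 3; 4; 1; 2; 3; 4; 5; 6; 7]
  end.

Definition LeT (D : seq (seq nat)) := [seq [seq rleL a b | b <- D] | a <- D].
Definition AdjT (D : seq (seq nat)) := [seq [seq hadjL a b | b <- D] | a <- D].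

Definition okI (T : seq (seq bool)) (q : seq bool) : bool :=
  all (fun i => all (fun j => (nth false q i && nth false (nth [::] T j) i) ==> nth false q j)
     (iota 0 (size q))) (iota 0 (size q)).

Definition IL (s : nat) : seq (seq bool) :=
  let D := Dl s in let T := LeT D in enumk [:: false; true] (okI T) (size D).

Definition okH (s : nat) (D : seq (seq nat)) (A : seq (seq bool)) (q : seq nat) : bool :=
  all (fun i => let qi := nth 0 q i in
   [&& (nth [::] D i == eL s) ==> (qi == s),
       all (fun j => nth false (nth [::] A i) j ==> dyn_adj s qi (nth 0 q j)) (iota 0 (size q)) &
       all (fun j => nth false (nth [::] A i) j ==> (j < size q)) (iota 0 (size D)) ==>
         all (fun v => dyn_adj s qi v ==>
                has (fun j => nth false (nth [::] A i) j && (nth 0 q j == v)) (iota 0 (size q)))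
           (iota 1 s)]) (iota 0 (size q)).

Definition HL (s : nat) : seq (seq nat) :=
  let D := Dl s in let A := AdjT D in enumk (iota 1 s) (okH s D A) (size D).

Definition Tl (s : nat) : seq (seq nat) :=
  if s == 7 then [seq l <- Dl 8 | l != thetaL] else Dl s.+1.

Definition pvL (s : nat) (q : seq nat) (m : seq bool) : seq nat :=
  [seq nat_of_bool (k.+1 == s.+1) +
     count (fun i => nth false m i && (nth 0 q i == k.+1)) (iota 0 (size m)) | k <- iota 0 8].

Definition okC (s : nat) (I : seq (seq bool)) (T : seq (seq nat)) (q : seq nat) : bool :=
  all (fun m => ~~ has id (drop (size q) m) ==> (pvL s q m \in T)) I.

Definition CL (s : nat) : seq (seq nat) :=
  let I := IL s in let T := Tl s in enumk (iota 1 s) (okC s I T) (size (Dl s)).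

Definition mle (m1 m2 : seq bool) : bool :=
  all (fun i => nth false m1 i ==> nth false m2 i) (iota 0 (size m1)).

Definition check (s : nat) : bool :=
  let D := Dl s in let I := IL s in let T := Tl s in let h := hv s in
  let P := [seq (m, pvL s h m) | m <- I] in
  [&& uniq D, eL s \in D, size h == size D,
      HL s == [:: h], CL s == [:: h],
      all (fun mp => mp.2 \in T) P,
      all (fun t => has (fun mp => mp.2 == t) P) T &
      all (fun mp1 => all (fun mp2 => mle mp1.1 mp2.1 == rleL mp1.2 mp2.2) P) P].

Lemma theta_facts : [&& posL thetaL, all (fun l => rleL l thetaL) rootsL &
  all (fun l => rleL thetaL l ==> (l == thetaL)) rootsL].
Proof. by vm_compute. Qed.

Lemma Dl8_size : all (fun s => all (fun l => size l == 8) (Dl s)) [:: 3; 4; 5; 6; 7; 8].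
Proof. by vm_compute. Qed.

Lemma checks : all check [:: 3; 4; 5; 6; 7].
Proof. vm_compute. reflexivity. Qed.

Lemma HLE s : HL s = enumk (iota 1 s) (okH s (Dl s) (AdjT (Dl s))) (size (Dl s)). Proof. by []. Qed.
Lemma ILE s : IL s = enumk [:: false; true] (okI (LeT (Dl s))) (size (Dl s)). Proof. by []. Qed.
Lemma CLE s : CL s = enumk (iota 1 s) (okC s (IL s) (Tl s)) (size (Dl s)). Proof. by []. Qed.
Lemma TlE s : Tl s = if s == 7 then [seq l <- Dl 8 | l != thetaL] else Dl s.+1. Proof. by []. Qed.
Arguments Dl : simpl never.
Opaque Dl rootsL IL HL CL Tl.

Lemma enumk_vals (A : eqType) vals (ok : seq A -> bool) k m :
  m \in enumk vals ok k -> all (mem vals) m.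
Proof.
elim: k m => [|k IH] m /=; first by rewrite inE => /eqP ->.
case/flattenP => _ /mapP [p /IH ap ->] /mapP [v]; rewrite mem_filter => /andP[_ vv] ->.
by rewrite all_rcons ap andbT; exact: vv.
Qed.

Definition x0 : V := vec [::].
Definition DV (s : nat) : seq V := map vec (Dl s).

Lemma size8 s l : l \in Dl s -> size l = 8.
Proof.
rewrite mem_filter => /andP[_ lr].
by have /allP/(_ _ lr)/eqP := rootsL_size.
Qed.

Lemma size_DV s : size (DV s) = size (Dl s). Proof. by rewrite size_map. Qed.

Lemma nth_DV s i : i < size (Dl s) -> nth x0 (DV s) i = vec (nth [::] (Dl s) i).
Proof. by move=> lt; rewrite (nth_map [::]). Qed.

Lemma lst_DV s i : i < size (Dl s) -> lst (nth x0 (DV s) i) = nth [::] (Dl s) i.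
Proof. by move=> lt; rewrite nth_DV // vecK // (size8 (mem_nth _ lt)). Qed.

Lemma DV_Delta s b : Delta s b = (b \in DV s).
Proof.
rewrite DeltaE; apply/idP/idP => [H|/mapP [l lD ->]].
  by rewrite -(lstK b); apply: map_f.
by rewrite (vecK (size8 lD)).
Qed.

Lemma DV_nth s b : b \in DV s -> exists2 i, i < size (Dl s) & b = nth x0 (DV s) i.
Proof.
move=> bD; exists (index b (DV s)); first by rewrite -size_DV index_mem.
by rewrite nth_index.
Qed.

Lemma uniq_DV s : uniq (Dl s) -> uniq (DV s).
Proof.
move=> u; rewrite map_inj_in_uniq // => a b aD bD /eqP.
by rewrite (vec_inj (size8 aD) (size8 bD)) => /eqP.
Qed.

Lemma DV_Delta_nth s i : i < size (Dl s) -> Delta s (nth x0 (DV s) i).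
Proof. by move=> lt; rewrite DV_Delta mem_nth ?size_DV. Qed.

Lemma check_s s : 3 <= s <= 7 -> check s.
Proof.
move=> /andP[a b]; apply: (allP checks); move: a b.
by case: s => [|[|[|[|[|[|[|[|s]]]]]]]].
Qed.

Lemma check_parts s : check s ->
  [/\ uniq (Dl s), eL s \in Dl s, size (hv s) = size (Dl s), HL s = [:: hv s] &
   [/\ CL s = [:: hv s],
       all (fun m => pvL s (hv s) m \in Tl s) (IL s),
       all (fun t => has (fun m => pvL s (hv s) m == t) (IL s)) (Tl s) &
       all (fun m1 => all (fun m2 => mle m1 m2 == rleL (pvL s (hv s) m1) (pvL s (hv s) m2))
          (IL s)) (IL s)]].
Proof.
rewrite /check; cbv zeta.
case/and5P => u e /eqP sz /eqP hl /and4P [/eqP cl a3 a4 a5].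
split; [exact: u | exact: e | exact: sz | exact: hl | split; [exact: cl| | |]].
- by move: a3; rewrite all_map.
- apply/allP => t tT; have /hasP [[m p]] := allP a4 t tT.
  by case/mapP => m' m'I [-> ->] /= /eqP <-; apply/hasP; exists m'.
- apply/allP => m1 m1I; apply/allP => m2 m2I.
  have /allP := a5.
  move=> /(_ (m1, pvL s (hv s) m1) (map_f _ m1I)) /allP.
  by move=> /(_ (m2, pvL s (hv s) m2) (map_f _ m2I)).
Qed.

Definition h0 (s : nat) (b : V) : nat := nth 0 (hv s) (index (lst b) (Dl s)).

Lemma h0_nth s i : uniq (Dl s) -> i < size (Dl s) -> h0 s (nth x0 (DV s) i) = nth 0 (hv s) i.
Proof. by move=> u lt; rewrite /h0 lst_DV // index_uniq. Qed.

Lemma AdjT_nth D i j : i < size D -> j < size D ->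
  nth false (nth [::] (AdjT D) i) j = hadjL (nth [::] D i) (nth [::] D j).
Proof. by move=> ??; rewrite /AdjT (nth_map [::]) // (nth_map [::]). Qed.

Lemma LeT_nth D i j : i < size D -> j < size D ->
  nth false (nth [::] (LeT D) i) j = rleL (nth [::] D i) (nth [::] D j).
Proof. by move=> ??; rewrite /LeT (nth_map [::]) // (nth_map [::]). Qed.

Lemma hadj_DV s i j : i < size (Dl s) -> j < size (Dl s) ->
  hadj (nth x0 (DV s) i) (nth x0 (DV s) j) = nth false (nth [::] (AdjT (Dl s)) i) j.
Proof. by move=> ??; rewrite hadjE !lst_DV // AdjT_nth. Qed.

Lemma rle_DV s i j : i < size (Dl s) -> j < size (Dl s) ->
  rle (nth x0 (DV s) i) (nth x0 (DV s) j) = nth false (nth [::] (LeT (Dl s)) i) j.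
Proof. by move=> ??; rewrite rleE !lst_DV // LeT_nth. Qed.

Lemma alpha_DV s : eL s \in Dl s ->
  alpha s = nth x0 (DV s) (index (eL s) (Dl s)).
Proof.
move=> e; rewrite nth_DV ?index_mem // nth_index //.
by rewrite -(lst_alpha s) lstK.
Qed.

Lemma h0_is_hs s : check s -> is_hs s (h0 s).
Proof.
case/check_parts => u e sz hl _.
have hvin : hv s \in enumk (iota 1 s) (okH s (Dl s) (AdjT (Dl s))) (size (Dl s)) by rewrite -HLE hl inE.
have n0 : 0 < size (Dl s) by case: (Dl s) e.
have [_ /(_ n0) okh] := enumk_ok hvin.
have vals := enumk_vals hvin.
have OKi i (lt : i < size (Dl s)) := allP okh i ltac:(by rewrite mem_iota sz).
split.
- rewrite /h0 lst_alpha; set i := index _ _.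
  have lt : i < size (Dl s) by rewrite index_mem.
  by case/and3P: (OKi i lt) => /implyP; rewrite nth_index // eqxx => /(_ isT) /eqP.
- move=> b; rewrite DV_Delta => /DV_nth [i lt ->]; rewrite h0_nth //.
  have hi : nth 0 (hv s) i \in iota 1 s by apply: (allP vals); rewrite mem_nth ?sz.
  by move: hi; rewrite mem_iota add1n ltnS.
- move=> b c; rewrite !DV_Delta => /DV_nth [i li ->] /DV_nth [j lj ->].
  rewrite hadj_DV // !h0_nth // => A.
  case/and3P: (OKi i li) => _ /allP /(_ j) + _; rewrite mem_iota sz lj => /(_ isT).
  by rewrite A.
- move=> b j0; rewrite DV_Delta => /DV_nth [i li ->]; rewrite h0_nth // => dj.
  case/and3P: (OKi i li) => _ _ /implyP H.
  have /allP H2 := H ltac:(by apply/allP => j; rewrite mem_iota sz => /andP[_ ->]; rewrite implybT).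
  have := H2 j0; rewrite dj mem_iota.
  move: dj => /and3P [_ /andP[j1 j2] _]; rewrite j1 add1n ltnS j2 => /(_ isT) /hasP [j].
  rewrite mem_iota sz => /andP[_ lj] /andP [A /eqP hj].
  exists (nth x0 (DV s) j); split; first exact: DV_Delta_nth.
    by rewrite hadj_DV.
  by rewrite h0_nth.
Qed.

Lemma nth_take_map (f : V -> nat) s k i : i < k -> i < size (Dl s) ->
  nth 0 (take k (map f (DV s))) i = f (nth x0 (DV s) i).
Proof. by move=> ik lt; rewrite nth_take // (nth_map x0) ?size_DV. Qed.

Lemma hs_unique s hs : check s -> is_hs s hs -> map hs (DV s) = hv s.
Proof.
move=> cs [ha hr hh ho].
have [u e sz hl _] := check_parts cs.
have : map hs (DV s) \in HL s.
  rewrite HLE -(size_DV s) -(size_map hs).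
  apply: enumk_complete; last first.
    apply/allP => v /mapP [b bD ->]; suff : hs b \in iota 1 s by [].
    rewrite mem_iota add1n ltnS.
    by apply: hr; rewrite DV_Delta.
  move=> k /andP [k0]; rewrite size_map size_DV => kn.
  have sq : size (take k (map hs (DV s))) = k by rewrite size_take size_map size_DV ltn_neqAle kn andbT; case: eqP => // ->.
  apply/allP => i; rewrite sq mem_iota /= => ik.
  have lt : i < size (Dl s) by apply: leq_trans ik kn.
  rewrite nth_take_map //.
  apply/and3P; split.
  - apply/implyP => /eqP Di; apply/eqP.
    suff -> : nth x0 (DV s) i = alpha s by [].
    by rewrite nth_DV // Di -(lst_alpha s) lstK.
  - apply/allP => j; rewrite mem_iota /= => jk.
    have lj : j < size (Dl s) by apply: leq_trans jk kn.
    rewrite nth_take_map // -hadj_DV //; apply/implyP => A.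
    by apply: hh => //; apply: DV_Delta_nth.
  - apply/implyP => /allP nbk; apply/allP => v; rewrite mem_iota => /andP [v1 v2].
    apply/implyP => dv.
    have [c [Dc Ac hc]] := ho _ _ (DV_Delta_nth lt) dv.
    move: Dc; rewrite DV_Delta => /DV_nth [j lj ec].
    have jk : j < k.
      have := nbk j; rewrite mem_iota lj -hadj_DV // -ec Ac /=.
      by move/(_ isT).
    apply/hasP; exists j; first by rewrite mem_iota.
    by rewrite -hadj_DV // -ec Ac nth_take_map // -ec hc eqxx.
by rewrite hl inE => /eqP.
Qed.

Lemma sum_count (T : Type) (r : seq T) (P : pred T) :
  \sum_(b <- r) nat_of_bool (P b) = count P r.
Proof. by elim: r => [|x r IH]; rewrite ?big_nil ?big_cons ?IH. Qed.

Definition maskJ (s : nat) (J : {fset V}) : seq bool := [seq b \in J | b <- DV s].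

Lemma size_maskJ s J : size (maskJ s J) = size (Dl s).
Proof. by rewrite size_map size_DV. Qed.

Lemma psiE s h (J : {fset V}) : uniq (Dl s) -> {subset J <= DV s} ->
  psi s h J = vec (pvL s (map h (DV s)) (maskJ s J)).
Proof.
move=> u sub; apply/ffunP => k; rewrite !ffunE (nth_map 0) ?size_iota //.
rewrite nth_iota // add0n; congr (_ + _).
rewrite (eq_bigr (fun b => nat_of_bool ((fun b => h b == k.+1) b))); last first.
  by move=> b _; rewrite eq_sym.
rewrite sum_count.
have pe : perm_eq (enum_fset J) [seq b <- DV s | b \in J].
  apply: uniq_perm; [exact: fset_uniq | by rewrite filter_uniq ?uniq_DV |].
  move=> x; rewrite mem_filter; apply/idP/andP => [xJ|[]//]; split=> //; exact: sub.
rewrite (permP pe) count_filter size_maskJ.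
rewrite -{1}(mkseq_nth x0 (DV s)) /mkseq count_map size_DV.
apply: eq_in_count => i; rewrite mem_iota add0n /= => lt.
by rewrite andbC /maskJ !(nth_map x0) ?size_DV.
Qed.

Definition Jof (s : nat) (m : seq bool) : {fset V} :=
  seq_fset tt [seq nth x0 (DV s) i | i <- iota 0 (size (Dl s)) & nth false m i].

Lemma in_Jof s m x : uniq (Dl s) ->
  (x \in Jof s m) = has (fun i => nth false m i && (x == nth x0 (DV s) i)) (iota 0 (size (Dl s))).
Proof.
move=> u; rewrite /Jof seq_fsetE; apply/mapP/hasP => [[i]|[i]].
  by rewrite mem_filter => /andP [mi ii] ->; exists i; rewrite ?mi ?eqxx.
by move=> ii /andP [mi /eqP ->]; exists i; rewrite ?mem_filter ?mi.
Qed.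

Lemma Jof_nth s m i : uniq (Dl s) -> i < size (Dl s) ->
  (nth x0 (DV s) i \in Jof s m) = nth false m i.
Proof.
move=> u lt; rewrite in_Jof //; apply/hasP/idP => [[j]|mi].
  rewrite mem_iota /= => lj /andP [mj /eqP e].
  have : nth x0 (DV s) i == nth x0 (DV s) j by rewrite e.
  by rewrite nth_uniq ?size_DV ?uniq_DV // => /eqP ->.
by exists i; rewrite ?mem_iota ?mi ?eqxx.
Qed.

Lemma maskJ_Jof s m : uniq (Dl s) -> size m = size (Dl s) -> maskJ s (Jof s m) = m.
Proof.
move=> u sm; apply: (@eq_from_nth _ false); first by rewrite size_maskJ sm.
move=> i; rewrite size_maskJ => lt.
by rewrite /maskJ (nth_map x0) ?size_DV // Jof_nth.
Qed.

Lemma Jof_sub s m : uniq (Dl s) -> {subset Jof s m <= DV s}.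
Proof.
move=> u x; rewrite in_Jof // => /hasP [i]; rewrite mem_iota /= => lt /andP [_ /eqP ->].
by rewrite mem_nth ?size_DV.
Qed.

Lemma ideal_sub s J : is_ideal s J -> {subset J <= DV s}.
Proof. by case=> H _ x /H; rewrite DV_Delta. Qed.

Lemma ideal_IL s J : uniq (Dl s) -> is_ideal s J -> maskJ s J \in IL s.
Proof.
move=> u [H1 H2].
rewrite ILE -(size_maskJ s J); apply: enumk_complete; last first.
  by apply/allP => b _; case: b.
move=> k /andP [k0]; rewrite size_maskJ => kn.
have sq : size (take k (maskJ s J)) = k.
  by rewrite size_take size_maskJ ltn_neqAle kn andbT; case: eqP => // ->.
apply/allP => i; rewrite sq mem_iota /= => ik; apply/allP => j; rewrite mem_iota /= => jk.
have li : i < size (Dl s) by apply: leq_trans ik kn.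
have lj : j < size (Dl s) by apply: leq_trans jk kn.
rewrite !nth_take // /maskJ !(nth_map x0) ?size_DV // -rle_DV //.
apply/implyP => /andP [iJ le]; apply: H2 iJ _ le; exact: DV_Delta_nth.
Qed.

Lemma Jof_ideal s m : uniq (Dl s) -> m \in IL s -> is_ideal s (Jof s m).
Proof.
move=> u mI.
have n0 : 0 < size (Dl s) \/ size (Dl s) = 0 by case: (size (Dl s)) => [|n]; [right|left].
rewrite ILE in mI; have [sm okm] := enumk_ok mI.
split.
  by move=> b /(Jof_sub u); rewrite DV_Delta.
move=> b c bJ; rewrite DV_Delta => /DV_nth [j lj ->].
have /DV_nth [i li ei] := Jof_sub u bJ.
move: bJ; rewrite ei rle_DV // => mi lji.
rewrite Jof_nth // in mi; rewrite Jof_nth //.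
have okm' := okm ltac:(by case: (size (Dl s)) lj).
have /allP := okm'; move=> /(_ i); rewrite mem_iota sm li => /(_ isT) /allP /(_ j).
by rewrite mem_iota lj mi lji => /(_ isT).
Qed.

Lemma highestE b : is_highest b <-> lst b = thetaL.
Proof.
have /and3P [pt rt tr] := theta_facts.
split.
  case=> pb H; have := H (vec thetaL); rewrite pos_rootE vecK // => /(_ pt).
  rewrite rleE vecK // => r.
  by have /implyP := allP tr (lst b) (pos_root_lst pb); rewrite r => /(_ isT) /eqP.
move=> e; split; first by rewrite pos_rootE e.
by move=> c pc; rewrite rleE e; exact: (allP rt _ (pos_root_lst pc)).
Qed.

Lemma targetE s b : target s b <-> lst b \in Tl s.
Proof.
rewrite TlE; case: eqP => [s7|ne].
  subst s; split.
    case=> D H; rewrite mem_filter -DeltaE D andbT.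
    by apply/eqP => e; apply: (H erefl); apply/highestE.
  rewrite mem_filter => /andP [nt D]; split; first by rewrite DeltaE.
  by move=> _ /highestE e; rewrite e eqxx in nt.
split; first by case=> D _; rewrite -DeltaE.
by move=> D; split; [rewrite DeltaE | move=> /ne].
Qed.

Lemma size_pvL s q m : size (pvL s q m) = 8. Proof. by rewrite size_map size_iota. Qed.

Lemma IL_size s m : m \in IL s -> size m = size (Dl s).
Proof. by rewrite ILE => /enumk_ok []. Qed.

Lemma psi_iso_of s h : check s -> map h (DV s) = hv s -> psi_iso s h.
Proof.
move=> cs hm; have [u e sz hl [cl c3 c4 c5]] := check_parts cs.
split.
- move=> J HJ; rewrite psiE ?hm //; last exact: ideal_sub.
  by apply/targetE; rewrite vecK ?size_pvL //; exact: (allP c3 _ (ideal_IL u HJ)).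
- move=> b /targetE bt; have /hasP [m mI /eqP pm] := allP c4 _ bt.
  exists (Jof s m); split; first exact: Jof_ideal.
  rewrite psiE //; last exact: Jof_sub.
  by rewrite hm (maskJ_Jof u (IL_size mI)) pm lstK.
- move=> J1 J2 H1 H2.
  rewrite !psiE ?hm //; try exact: ideal_sub.
  rewrite rleE !vecK ?size_pvL //.
  have /eqP <- := allP (allP c5 _ (ideal_IL u H1)) _ (ideal_IL u H2).
  split.
    move/fsubsetP => sub; apply/allP => i; rewrite size_maskJ mem_iota => /andP [_ lt].
    rewrite /maskJ !(nth_map x0) ?size_DV //; apply/implyP; exact: sub.
  move/allP => H; apply/fsubsetP => x xJ.
  have /DV_nth [i lt ei] := ideal_sub H1 xJ.
  have := H i; rewrite size_maskJ mem_iota lt /maskJ !(nth_map x0) ?size_DV // -ei.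
  by rewrite xJ => /(_ isT).
Qed.

Lemma pvL_take s q m k : ~~ has id (drop k m) -> pvL s (take k q) m = pvL s q m.
Proof.
move=> nd; apply: eq_map => K; congr (_ + _); apply: eq_in_count => i.
rewrite mem_iota => /andP [_ lt].
case mi: (nth false m i) => //=.
case: (ltnP i k) => [ik|ki]; first by rewrite nth_take.
exfalso; move/negP: nd; apply; apply/hasP; exists (nth false (drop k m) (i - k)).
  rewrite add0n in lt; have ks : k < size m := leq_ltn_trans ki lt.
  by apply: mem_nth; rewrite size_drop ltn_sub2r.
by rewrite nth_drop subnKC.
Qed.

Lemma canon s h : 3 <= s <= 7 -> check s -> (forall b, Delta s b -> 1 <= h b <= s) ->
  psi_iso s h -> map h (DV s) = hv s.
Proof.
move=> s37 cs hr [Ht _ _]; have [u e sz hl [cl c3 c4 c5]] := check_parts cs.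
have : map h (DV s) \in CL s.
  rewrite CLE -(size_DV s) -(size_map h).
  apply: enumk_complete; last first.
    apply/allP => v /mapP [b bD ->]; suff : h b \in iota 1 s by [].
    rewrite mem_iota add1n ltnS.
    by apply: hr; rewrite DV_Delta.
  move=> k /andP [k0]; rewrite size_map size_DV => kn.
  have sq : size (take k (map h (DV s))) = k.
    by rewrite size_take size_map size_DV ltn_neqAle kn andbT; case: eqP => // ->.
  apply/allP => m mI; rewrite sq; apply/implyP => nd.
  have := Ht _ (Jof_ideal u mI); move/targetE.
  rewrite psiE //; last exact: Jof_sub.
  rewrite (maskJ_Jof u (IL_size mI)) vecK ?size_pvL //.
  by rewrite pvL_take.
by rewrite cl inE => /eqP.
Qed.

Theorem mainTheorem13 (s : nat) (hs3 : 3 <= s) (hs7 : s <= 7) :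
  (exists hs, is_hs s hs) /\
  (forall hs : V -> nat, is_hs s hs ->
     psi_iso s hs /\
     (forall h : V -> nat,
        (forall b, Delta s b -> 1 <= h b <= s) ->
        psi_iso s h ->
        forall b, Delta s b -> h b = hs b)).
Proof.
have s37 : 3 <= s <= 7 by rewrite hs3 hs7.
have cs := check_s s37.
split; first by exists (h0 s); exact: h0_is_hs.
move=> hs Hhs; have mh := hs_unique cs Hhs.
split; first exact: psi_iso_of cs mh.
move=> h hr hiso b; have mh' := canon s37 cs hr hiso.
rewrite DV_Delta => /DV_nth [i lt ->].
by rewrite -(nth_map x0 0 h) ?size_DV // -(nth_map x0 0 hs) ?size_DV // mh mh'.
Qed.
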